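(* Let $L(x)\in\mathbb{F}_{p^r}[x]$ be an additive polynomial and $A(x)\in\mathbb{F}_{p^r}[x]$. The following are equivalent: (i) $A(L(x))$ is an Alltop polynomial; (ii) $L(A(x))$ is an Alltop polynomial; (iii) $A(x)$ is an Alltop polynomial and $L(x)$ is a permutation polynomial of $\mathbb{F}_{p^r}$.
   Context: For $f:\mathbb{F}_{p^r}\to\mathbb{F}_{p^r}$ and $a\in\mathbb{F}_{p^r}$, $\Delta_{f,a}(x)=f(x+a)-f(x)$. A function $f$ is planar if for every $a\in\mathbb{F}_{p^r}^*$ the map $x\mapsto\Delta_{f,a}(x)$ is a bijection. A polynomial $A$ is an Alltop polynomial (function) if $\Delta_{A,a}$ is planar for every $a\in\mathbb{F}_{p^r}^*$. A polynomial $L$ is additive if $L(x+y)=L(x)+L(y)$ for all $x,y\in\mathbb{F}_{p^r}$. A permutation polynomial is one inducing a bijection of $\mathbb{F}_{p^r}$. *)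

(* Defs.v *)
From HB Require Import structures.
From mathcomp Require Import all_boot all_order all_algebra all_field.
Set Implicit Arguments. Unset Strict Implicit. Unset Printing Implicit Defensive.
Import GRing.Theory.
Local Open Scope ring_scope.

Section AlltopDefs.
Variable F : finFieldType.

Definition delta (f : F -> F) (a : F) : F -> F := fun x => f (x + a) - f x.

Definition planar (f : F -> F) : Prop :=
  forall a : F, a != 0 -> bijective (delta f a).

Definition alltop_fun (f : F -> F) : Prop :=
  forall a : F, a != 0 -> planar (delta f a).

Definition alltop_poly (A : {poly F}) : Prop := alltop_fun (fun x => A.[x]).

Definition additive_poly (L : {poly F}) : Prop :=
  forall x y : F, L.[x + y] = L.[x] + L.[y].

Definition permutation_poly (L : {poly F}) : Prop :=
  bijective (fun x : F => L.[x]).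

End AlltopDefs.

(* Main.v *)
Require Import Defs.
From HB Require Import structures.
From mathcomp Require Import all_boot all_order all_algebra all_field.
Local Open Scope ring_scope.
Import GRing.Theory.
From Stdlib Require Import FunctionalExtensionality.

Section Aux.
Variable F : finFieldType.
Implicit Types f g l : F -> F.

Definition dd f (a b : F) := delta (delta f a) b.

Lemma alltopE f : alltop_fun f <->
  (forall a b, a != 0 -> b != 0 -> bijective (dd f a b)).
Proof. by split => H a ? ? ? *; [exact: H | apply: H]. Qed.

Lemma dd_compL f l (hl : forall x y, l (x + y) = l x + l y) a b :
  dd (f \o l) a b =1 (dd f (l a) (l b)) \o l.
Proof. by move=> x; rewrite /dd /delta /= !hl. Qed.

Lemma dd_lcomp f l (hl : forall x y, l (x + y) = l x + l y) a b :
  dd (l \o f) a b =1 l \o (dd f a b).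
Proof.
have l0 : l 0 = 0 by apply: (addrI (l 0)); rewrite -hl !addr0.
have lN x : l (- x) = - l x by apply: (addrI (l x)); rewrite -hl !subrr l0.
have lB x y : l (x - y) = l x - l y by rewrite hl lN.
by move=> x; rewrite /dd /delta /= !lB.
Qed.

Lemma comp_bij_r f l : bijective (l \o f) -> bijective l -> bijective f.
Proof.
move=> hlf [li h1 h2]; apply: (eq_bij (bij_comp (Bijective h2 h1) hlf)).
by move=> x /=; rewrite h1.
Qed.

Lemma comp_bij_l f l : bijective (f \o l) -> bijective l -> bijective f.
Proof.
move=> hfl [li h1 h2]; apply: (eq_bij (bij_comp hfl (Bijective h2 h1))).
by move=> x /=; rewrite h2.
Qed.

Lemma bij_l_of_lcomp f l : bijective (l \o f) -> bijective l.
Proof.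
case=> h h1 h2; have kb : bijective (f \o h).
  apply: injF_bij => x y /= e; by rewrite -[x]h2 -[y]h2 /= e.
by apply: (bij_can_bij kb) => x; exact: h2.
Qed.

Lemma bij_l_of_compl f l : bijective (f \o l) -> bijective l.
Proof.
case=> h h1 h2; apply: injF_bij => x y e.
by rewrite -[x]h1 -[y]h1 /= e.
Qed.

Lemma main_iii_ii f l (hl : forall x y, l (x + y) = l x + l y) :
  alltop_fun (l \o f) <-> (alltop_fun f /\ bijective l).
Proof.
split.
  move=> /alltopE H.
  have bl : bijective l.
    apply: (@bij_l_of_lcomp (dd f 1 1)).
    apply: (eq_bij (H 1 1 (oner_neq0 _) (oner_neq0 _))); exact: dd_lcomp.
  split=> //; apply/alltopE => a b a0 b0; apply: comp_bij_r bl.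
  apply: (eq_bij (H a b a0 b0)); exact: dd_lcomp.
case=> /alltopE H bl; apply/alltopE => a b a0 b0; apply: (eq_bij (bij_comp bl (H a b a0 b0))).
by move=> x; rewrite (dd_lcomp f l hl a b x).
Qed.

Lemma main_iii_i f l (hl : forall x y, l (x + y) = l x + l y) :
  alltop_fun (f \o l) <-> (alltop_fun f /\ bijective l).
Proof.
have l0 : l 0 = 0 by apply: (addrI (l 0)); rewrite -hl !addr0.
split.
  move=> /alltopE H.
  have bl : bijective l.
    apply: (@bij_l_of_compl (dd f (l 1) (l 1))).
    apply: (eq_bij (H 1 1 (oner_neq0 _) (oner_neq0 _))); exact: dd_compL.
  split=> //; case: bl => li h1 h2; apply/alltopE => a b a0 b0.
  have li0 c : c != 0 -> li c != 0.
    by apply: contra => /eqP e; rewrite -[c]h2 e l0.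
  apply: (@comp_bij_l _ l); last exact: Bijective h1 h2.
  apply: (eq_bij (H _ _ (li0 a a0) (li0 b b0))) => x.
  by rewrite (dd_compL f l hl _ _ x) !h2.
case=> /alltopE H bl; apply/alltopE => a b a0 b0.
have ln0 c : c != 0 -> l c != 0.
  case: bl => li h1 h2; apply: contra => /eqP e.
  by rewrite -[c]h1 e -{1}l0 h1.
apply: (eq_bij (bij_comp (H _ _ (ln0 a a0) (ln0 b b0)) bl)) => x.
by rewrite (dd_compL f l hl a b x).
Qed.

End Aux.

Theorem lemma4 (F : finFieldType) (L A : {poly F}) :
  additive_poly L ->
  [/\ (alltop_poly (A \Po L) <-> alltop_poly (L \Po A)),
      (alltop_poly (L \Po A) <-> (alltop_poly A /\ permutation_poly L)) &
      (alltop_poly (A \Po L) <-> (alltop_poly A /\ permutation_poly L))].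
Proof.
move=> hL.
have e1 : alltop_poly (A \Po L) <-> alltop_fun ((fun x => A.[x]) \o (fun x => L.[x])).
  by rewrite /alltop_poly; have -> // : (fun x => (A \Po L).[x]) = (fun x => A.[x]) \o (fun x => L.[x]) by apply: functional_extensionality => x; rewrite horner_comp.
have e2 : alltop_poly (L \Po A) <-> alltop_fun ((fun x => L.[x]) \o (fun x => A.[x])).
  by rewrite /alltop_poly; have -> // : (fun x => (L \Po A).[x]) = (fun x => L.[x]) \o (fun x => A.[x]) by apply: functional_extensionality => x; rewrite horner_comp.
have h2 := @main_iii_ii F (fun x => A.[x]) _ hL.
have h1 := @main_iii_i F (fun x => A.[x]) _ hL.
rewrite /permutation_poly; split; tauto.
Qed.
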